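(* For every integer $p\ge 0$, the edge set of $K_{4p+1,4p+1,4p+1}\times K_2$ can be partitioned into $2p+1$ planar subgraphs; in particular $\theta(K_{4p+1,4p+1,4p+1}\times K_2)\le 2p+1$.
   Context: The thickness $\theta(G)$ of a graph $G$ is the minimum number of planar subgraphs whose union is $G$. The Kronecker product $G\times H$ of graphs $G$ and $H$ is the graph with vertex set $V(G)\times V(H)$ in which $(g,h)$ and $(g',h')$ are adjacent if and only if $gg'\in E(G)$ and $hh'\in E(H)$. $K_{n,n,n}$ denotes the complete tripartite graph with three parts of size $n$. *)

(* Defs.v *)
From Stdlib Require Import Reals Arith.
Open Scope R_scope.

Definition pt := (R * R)%type.

Definition dist2 (p q : pt) : R :=
  sqrt ((fst p - fst q) ^ 2 + (snd p - snd q) ^ 2).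

Definition cont01 (f : R -> pt) : Prop :=
  forall t, 0 <= t <= 1 -> forall eps, 0 < eps -> exists delta, 0 < delta /\
    forall s, 0 <= s <= 1 -> Rabs (s - t) < delta -> dist2 (f s) (f t) < eps.

Definition inj01 (f : R -> pt) : Prop :=
  forall s t, 0 <= s <= 1 -> 0 <= t <= 1 -> f s = f t -> s = t.

Definition planar {V : Type} (E : V -> V -> Prop) : Prop :=
  exists (pos : V -> pt) (arc : V -> V -> R -> pt),
    (forall u v, pos u = pos v -> u = v) /\
    (forall u v, E u v ->
       cont01 (arc u v) /\ inj01 (arc u v) /\
       arc u v 0 = pos u /\ arc u v 1 = pos v /\
       (forall t w, 0 < t < 1 -> arc u v t <> pos w)) /\
    (forall u v u' v', E u v -> E u' v' ->
       ~ ((u = u' /\ v = v') \/ (u = v' /\ v = u')) ->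
       forall t t', 0 < t < 1 -> 0 < t' < 1 -> arc u v t <> arc u' v' t').

(* Vertices of K_{n,n,n} x K_2: (part i < 3, index a < n, side s : bool). *)
Definition vert (n : nat) : Type :=
  { x : nat * nat * bool | (fst (fst x) < 3 /\ snd (fst x) < n)%nat }.

(* Kronecker product adjacency: parts differ (edge of K_{n,n,n}) and
   sides differ (edge of K_2). *)
Definition KnnnK2_adj (n : nat) (x y : vert n) : Prop :=
  fst (fst (proj1_sig x)) <> fst (fst (proj1_sig y)) /\
  snd (proj1_sig x) <> snd (proj1_sig y).

(* Main.v *)
Require Import Defs.
From Stdlib Require Import Reals Arith Lia Lra Psatz ProofIrrelevance.
Open Scope R_scope.

Definition sg (s : bool) : R := if s then 1 else -1.
Definition arcpt (a b : R) (s : bool) (t : R) : pt :=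
  (a + (b - a) * t, sg s * ((a + (b - a) * t - a) * (b - (a + (b - a) * t)))).

Lemma arcpt_swap a b s t : arcpt a b s t = arcpt b a s (1 - t).
Proof. unfold arcpt. f_equal; ring. Qed.

Lemma Ppos a b t : a <> b -> 0 < t < 1 ->
  0 < (a + (b - a) * t - a) * (b - (a + (b - a) * t)).
Proof.
  intros H Ht.
  replace ((a + (b - a) * t - a) * (b - (a + (b - a) * t))) with ((b-a)*(b-a) * (t * (1 - t))) by ring.
  apply Rmult_lt_0_compat.
  - assert (b - a <> 0) by lra. nra.
  - nra.
Qed.

Lemma core_sorted (a b c d : R) s t t' : a < b -> c < d -> 0 < t < 1 -> 0 < t' < 1 ->
  (b <= c \/ d <= a \/ (a <= c /\ d <= b /\ (a < c \/ d < b)) \/ (c <= a /\ b <= d /\ (c < a \/ b < d))) ->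
  arcpt a b s t <> arcpt c d s t'.
Proof.
  intros Hab Hcd Ht Ht' Hcase Heq. unfold arcpt in Heq.
  injection Heq as H1 H2.
  set (X := a + (b - a) * t) in *.
  set (X' := c + (d - c) * t') in *.
  assert (HX1 : a < X) by (unfold X; nra).
  assert (HX2 : X < b) by (unfold X; nra).
  assert (HX3 : c < X') by (unfold X'; nra).
  assert (HX4 : X' < d) by (unfold X'; nra).
  assert (HP : (X - a) * (b - X) = (X' - c) * (d - X')).
  { destruct s; simpl in H2; lra. }
  rewrite <- H1 in HP, HX3, HX4.
  assert (Hid : (X - a) * (b - X) - (X - c) * (d - X) = (c - a) * (b - X) + (X - c) * (b - d)) by ring.
  assert (Hid2 : (X - c) * (d - X) - (X - a) * (b - X) = (a - c) * (d - X) + (X - a) * (d - b)) by ring.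
  destruct Hcase as [H|[H|[[H3 [H4 H5]]|[H3 [H4 H5]]]]].
  - lra.
  - lra.
  - destruct H5; nra.
  - destruct H5; nra.
Qed.

Definition ilv (a b c d : nat) : Prop :=
  (Nat.min a b < Nat.min c d /\ Nat.min c d < Nat.max a b /\ Nat.max a b < Nat.max c d)%nat \/
  (Nat.min c d < Nat.min a b /\ Nat.min a b < Nat.max c d /\ Nat.max c d < Nat.max a b)%nat.

Lemma core_nat_sorted (na nb nc nd : nat) s t t' : (na < nb)%nat -> (nc < nd)%nat ->
  0 < t < 1 -> 0 < t' < 1 ->
  ~ ((na = nc /\ nb = nd) \/ (na = nd /\ nb = nc)) -> ~ ilv na nb nc nd ->
  arcpt (INR na) (INR nb) s t <> arcpt (INR nc) (INR nd) s t'.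
Proof.
  intros Hab Hcd Ht Ht' Hns Hni.
  unfold ilv in Hni.
  assert (D : (nb <= nc \/ nd <= na \/ (na <= nc /\ nd <= nb /\ (na < nc \/ nd < nb)) \/
            (nc <= na /\ nb <= nd /\ (nc < na \/ nb < nd)))%nat) by lia.
  apply core_sorted; try (apply lt_INR; assumption); try assumption.
  destruct D as [H|[H|[[H1 [H2 H3]]|[H1 [H2 H3]]]]].
  - left; apply le_INR; exact H.
  - right; left; apply le_INR; exact H.
  - right; right; left; repeat split; try (apply le_INR; assumption).
    destruct H3; [left|right]; apply lt_INR; assumption.
  - right; right; right; repeat split; try (apply le_INR; assumption).
    destruct H3; [left|right]; apply lt_INR; assumption.
Qed.

Lemma core_nat (na nb nc nd : nat) s s' t t' : na <> nb -> nc <> nd ->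
  0 < t < 1 -> 0 < t' < 1 ->
  ~ ((na = nc /\ nb = nd) \/ (na = nd /\ nb = nc)) -> (s = s' -> ~ ilv na nb nc nd) ->
  arcpt (INR na) (INR nb) s t <> arcpt (INR nc) (INR nd) s' t'.
Proof.
  intros Hab Hcd Ht Ht' Hns Hni.
  destruct (Bool.bool_dec s s') as [<-|Hss].
  2:{ intro Heq. unfold arcpt in Heq. injection Heq as H1 H2.
      assert (P1 := Ppos (INR na) (INR nb) t ltac:(intro E; apply INR_eq in E; contradiction) Ht).
      assert (P2 := Ppos (INR nc) (INR nd) t' ltac:(intro E; apply INR_eq in E; contradiction) Ht').
      destruct s, s'; try congruence; simpl in H2; lra. }
  specialize (Hni eq_refl).
  assert (Ht1 : 0 < 1 - t < 1) by lra.
  assert (Ht1' : 0 < 1 - t' < 1) by lra.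
  destruct (Nat.lt_trichotomy na nb) as [?|[?|?]]; [|congruence|];
  destruct (Nat.lt_trichotomy nc nd) as [?|[?|?]]; try congruence.
  - apply core_nat_sorted; auto.
  - rewrite (arcpt_swap (INR nc)). apply core_nat_sorted; auto; [lia|unfold ilv in *; lia].
  - rewrite (arcpt_swap (INR na)). apply core_nat_sorted; auto; [lia|unfold ilv in *; lia].
  - rewrite (arcpt_swap (INR na)), (arcpt_swap (INR nc)). apply core_nat_sorted; auto; [lia|unfold ilv in *; lia].
Qed.

Lemma cont_arcpt a b s : cont01 (arcpt a b s).
Proof.
  intros t Ht eps Heps.
  set (D := b - a).
  set (M := D^2 + D^4).
  assert (HM : 0 <= M) by (unfold M; nra).
  exists (eps / (M + 1)). split.
  { apply Rdiv_lt_0_compat; lra. }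
  intros s0 Hs0 Hd.
  unfold dist2, arcpt; cbn [fst snd].
  set (u := s0 - t) in *.
  assert (E : (a + (b - a) * s0 - (a + (b - a) * t)) ^ 2 +
     (sg s * ((a + (b - a) * s0 - a) * (b - (a + (b - a) * s0))) -
      sg s * ((a + (b - a) * t - a) * (b - (a + (b - a) * t)))) ^ 2
     = u^2 * (D^2 + D^4 * (1 - s0 - t)^2)).
  { unfold u, D. destruct s; simpl; ring. }
  rewrite E.
  assert (Hw : (1 - s0 - t)^2 <= 1) by nra.
  assert (Hu2 : u^2 < (eps / (M+1))^2).
  { assert (Habs : Rabs u < eps/(M+1)) by exact Hd.
    assert (0 <= Rabs u) by apply Rabs_pos.
    replace (u^2) with (Rabs u ^ 2) by (rewrite RPow_abs; apply Rabs_right; nra).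
    nra. }
  assert (Hle : u^2 * (D^2 + D^4 * (1 - s0 - t)^2) <= u^2 * (M+1)).
  { apply Rmult_le_compat_l; [nra|]. unfold M. assert (0 <= D^4) by nra. nra. }
  assert (Hfin : u^2 * (M+1) < eps^2).
  { assert (Hq : (eps / (M+1))^2 * (M+1) = eps^2 / (M+1)) by (field; lra).
    assert (eps^2 / (M+1) <= eps^2).
    { unfold Rdiv. rewrite <- (Rmult_1_r (eps^2)) at 2. apply Rmult_le_compat_l; [nra|].
      rewrite <- Rinv_1. apply Rinv_le_contravar; lra. }
    nra. }
  rewrite <- (sqrt_pow2 eps) by lra.
  apply sqrt_lt_1_alt. split; [|lra]. apply Rmult_le_pos; [apply pow2_ge_0|]. assert (0 <= D^4) by (replace (D^4) with ((D^2)^2) by ring; apply pow2_ge_0). assert (0 <= (1-s0-t)^2) by apply pow2_ge_0. assert (0 <= D^2) by apply pow2_ge_0. apply Rplus_le_le_0_compat; [lra|apply Rmult_le_pos; lra].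
Qed.

Lemma book_planar {V : Type} (E : V -> V -> Prop) (x : V -> nat) (pg : V -> V -> bool) :
  (forall u v, x u = x v -> u = v) ->
  (forall u v, E u v -> u <> v) ->
  (forall u v u' v', E u v -> E u' v' -> pg u v = pg u' v' -> ~ ilv (x u) (x v) (x u') (x v')) ->
  planar E.
Proof.
  intros Hx HE HNI.
  exists (fun u => (INR (x u), 0)), (fun u v => arcpt (INR (x u)) (INR (x v)) (pg u v)).
  split; [|split].
  - intros u v H. injection H as H. apply Hx, INR_eq, H.
  - intros u v Huv.
    assert (Hne : INR (x u) <> INR (x v)).
    { intro H. apply INR_eq, Hx in H. exact (HE u v Huv H). }
    split; [apply cont_arcpt|]. split; [|split; [|split]].
    + intros s t _ _ H. unfold arcpt in H. injection H as H1 _.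
      assert (H3 : (INR (x v) - INR (x u)) * (s - t) = 0) by lra.
      apply Rmult_integral in H3. destruct H3; lra.
    + unfold arcpt. f_equal; ring.
    + unfold arcpt. f_equal; ring.
    + intros t w Ht H. unfold arcpt in H. injection H as _ H2.
      assert (P := Ppos _ _ t Hne Ht).
      destruct (pg u v); simpl in H2; lra.
  - intros u v u' v' Huv Hu'v' Hns t t' Ht Ht'.
    apply core_nat; auto.
    + intro H. exact (HE u v Huv (Hx _ _ H)).
    + intro H. exact (HE u' v' Hu'v' (Hx _ _ H)).
    + intros [[H1 H2]|[H1 H2]]; apply Hns; [left|right]; split; apply Hx; assumption.
Qed.
Close Scope R_scope.

Definition QE (n r l r' l' : nat) : Prop :=
  ((r = 0 /\ (r' = 1 \/ r' = 5)) \/ (r = 2 /\ (r' = 1 \/ r' = 3)) \/ (r = 4 /\ (r' = 3 \/ r' = 5))) /\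
  (l' = l \/ l' = S l) /\ l' < n.

Definition posQ (n r l : nat) : nat :=
  if r =? 0 then 5 * n + (n - 1 - l) else if Nat.even l then 5 * l + (r - 1) else 5 * l + (5 - r).

Definition pg0 (r l r' : nat) : bool := if r =? 0 then r' =? 1 else Nat.even l.

Lemma ev0 a : Nat.even (2 * a) = true.
Proof. apply Nat.even_spec. exists a. reflexivity. Qed.
Lemma ev1 a : Nat.even (2 * a + 1) = false.
Proof. rewrite <- Nat.negb_odd. rewrite (proj2 (Nat.odd_spec _)); [reflexivity|]. exists a; reflexivity. Qed.
Lemma ev2 a : Nat.even (S (2 * a)) = false.
Proof. replace (S (2*a)) with (2*a+1) by lia. apply ev1. Qed.
Lemma ev3 a : Nat.even (S (2 * a + 1)) = true.
Proof. replace (S (2*a+1)) with (2*(a+1)) by lia. apply ev0. Qed.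

Ltac par l := let a := fresh "a" in destruct (Nat.Even_or_Odd l) as [[a ->]|[a ->]].

Lemma QNI n r l r' l' s m s' m' :
  QE n r l r' l' -> QE n s m s' m' -> pg0 r l r' = pg0 s m s' ->
  ~ ilv (posQ n r l) (posQ n r' l') (posQ n s m) (posQ n s' m').
Proof.
  intros [Hr [Hl Hn]] [Hs [Hm Hn']] Hp.
  unfold ilv, posQ, pg0 in *.
  par l; par m;
  destruct Hl as [->| ->]; destruct Hm as [->| ->];
  rewrite ?ev0, ?ev1, ?ev2, ?ev3 in *;
  destruct Hr as [[-> [-> | ->]]|[[-> [-> | ->]]|[-> [-> | ->]]]];
  destruct Hs as [[-> [-> | ->]]|[[-> [-> | ->]]|[-> [-> | ->]]]];
  cbn [Nat.eqb] in *; try discriminate; lia.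
Qed.

Lemma posQ_inj n r l r' l' : r < 6 -> r' < 6 -> l < n -> l' < n ->
  posQ n r l = posQ n r' l' -> r = r' /\ l = l'.
Proof.
  intros Hr Hr' Hl Hl' H. unfold posQ in H.
  par l; par l'; rewrite ?ev0, ?ev1 in H;
  (destruct r as [|[|[|[|[|[|r]]]]]]; [..|lia]);
  (destruct r' as [|[|[|[|[|[|r']]]]]]; [..|lia]);
  cbn [Nat.eqb] in H; lia.
Qed.

Definition Qedge n r l r' l' := QE n r l r' l' \/ QE n r' l' r l.
Definition pgQ r l r' l' := if Nat.even r then pg0 r l r' else pg0 r' l' r.

Lemma QE_even n r l r' l' : QE n r l r' l' -> Nat.even r = true /\ Nat.even r' = false.
Proof. intros [H _]. destruct H as [[-> [-> | ->]]|[[-> [-> | ->]]|[-> [-> | ->]]]]; auto. Qed.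

Lemma QNI_full n r l r' l' s m s' m' :
  Qedge n r l r' l' -> Qedge n s m s' m' -> pgQ r l r' l' = pgQ s m s' m' ->
  ~ ilv (posQ n r l) (posQ n r' l') (posQ n s m) (posQ n s' m').
Proof.
  unfold pgQ. intros [H1|H1] [H2|H2];
  destruct (QE_even _ _ _ _ _ H1) as [E1 E1']; destruct (QE_even _ _ _ _ _ H2) as [E2 E2'];
  rewrite ?E1, ?E1', ?E2, ?E2'; intro Hp;
  pose proof (QNI _ _ _ _ _ _ _ _ _ H1 H2 Hp); unfold ilv in *; lia.
Qed.

Ltac bdestr := repeat match goal with
 | H: context [if ?b then _ else _] |- _ => let E := fresh "E" in destruct b eqn:E
 | |- context [if ?b then _ else _] => let E := fresh "E" in destruct b eqn:E end;
 repeat match goal with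
 | H: (_ <=? _) = true |- _ => apply Nat.leb_le in H
 | H: (_ <=? _) = false |- _ => apply Nat.leb_gt in H
 | H: (_ <? _) = true |- _ => apply Nat.ltb_lt in H
 | H: (_ <? _) = false |- _ => apply Nat.ltb_ge in H
 | H: (_ =? _) = true |- _ => apply Nat.eqb_eq in H
 | H: (_ =? _) = false |- _ => apply Nat.eqb_neq in H
 end.

Ltac dm x := let q := fresh "q" in let r := fresh "r" in
  pose proof (Nat.div_mod_eq x 2); pose proof (Nat.mod_upper_bound x 2 ltac:(lia));
  set (q := x / 2) in *; set (r := x mod 2) in *.
Ltac divfacts := repeat match goal with
 | H : context [?x / 2] |- _ => dm x
 | |- context [?x / 2] => dm x
 | H : context [?x mod 2] |- _ => dm x
 | |- context [?x mod 2] => dm x end.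

Definition dd (p e o : nat) : nat := if e <=? o then o - e else o + (4*p+1) - e.

Definition col (p e o : nat) : nat :=
  if dd p e o =? 0 then 2*p
  else if dd p e o mod 2 =? 1 then (dd p e o - 1) / 2
  else if e + dd p e o / 2 =? 4*p+1 then 2*p else dd p e o / 2 - 1.

Definition lev (p k : nat) (s : bool) (i : nat) : nat :=
  if k <? 2*p then
    (if s then (if k+1 <=? i then i-(k+1) else i + (4*p+1) - (k+1))
     else (if i + k <? 4*p+1 then i+k else i+k-(4*p+1)))
  else (if i =? 0 then 0 else if i <=? 2*p then 2*i else 2*((4*p+1)-i)-1).

Lemma col_lt p a b : a < 4*p+1 -> b < 4*p+1 -> col p a b < 2*p+1.
Proof. intros. unfold col, dd. bdestr; divfacts; lia. Qed.

Lemma lev_lt p k s i : i < 4*p+1 -> lev p k s i < 4*p+1.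
Proof. intros. unfold lev. destruct s; bdestr; lia. Qed.

Lemma lev_inj p k s i j : i < 4*p+1 -> j < 4*p+1 -> lev p k s i = lev p k s j -> i = j.
Proof. intros. unfold lev in *. destruct s; bdestr; lia. Qed.

Lemma levpart p a b : a < 4*p+1 -> b < 4*p+1 ->
  let k := col p a b in
  (lev p k true b = lev p k false a \/ lev p k true b = S (lev p k false a)).
Proof. intros Ha Hb k. subst k. unfold col, dd, lev. bdestr; divfacts; lia. Qed.

Definition idx {n} (u : vert n) : nat := snd (fst (proj1_sig u)).
Definition prt {n} (u : vert n) : nat := fst (fst (proj1_sig u)).
Definition sd {n} (u : vert n) : bool := snd (proj1_sig u).

Definition grp (pt : nat) (s : bool) : nat :=
  if s then (if pt =? 0 then 3 else if pt =? 1 then 5 else 1) else 2 * pt.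

Definition cc (p : nat) (u v : vert (4 * p + 1)) : nat :=
  if sd u then col p (idx v) (idx u) else col p (idx u) (idx v).

Lemma QEpart p i j a b : (i < 3)%nat -> (j < 3)%nat -> i <> j -> (a < 4*p+1)%nat -> (b < 4*p+1)%nat ->
  QE (4*p+1) (grp i false) (lev p (col p a b) false a) (grp j true) (lev p (col p a b) true b).
Proof.
  intros Hi Hj Hij Ha Hb. split; [|split].
  - unfold grp. destruct i as [|[|[|i]]]; destruct j as [|[|[|j]]]; cbn [Nat.eqb]; lia.
  - apply levpart; assumption.
  - apply lev_lt; assumption.
Qed.

Lemma key p k (u v : vert (4*p+1)) : KnnnK2_adj (4*p+1) u v -> cc p u v = k ->
  Qedge (4*p+1) (grp (prt u) (sd u)) (lev p k (sd u) (idx u)) (grp (prt v) (sd v)) (lev p k (sd v) (idx v)).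
Proof.
  destruct u as [[[i a] s] [Hi Ha]], v as [[[j b] s'] [Hj Hb]].
  unfold KnnnK2_adj, cc, idx, prt, sd; simpl in *. intros [Hij Hss] Hk.
  destruct s, s'; try congruence; subst k.
  - right. apply QEpart; auto.
  - left. apply QEpart; auto.
Qed.

Lemma g_inj p k (u v : vert (4*p+1)) :
  grp (prt u) (sd u) = grp (prt v) (sd v) -> lev p k (sd u) (idx u) = lev p k (sd v) (idx v) -> u = v.
Proof.
  destruct u as [[[i a] s] [Hi Ha]], v as [[[j b] s'] [Hj Hb]].
  unfold idx, prt, sd; simpl in *. intros H1 H2.
  assert (s = s' /\ i = j) as [<- <-].
  { unfold grp in H1. destruct s, s'; destruct i as [|[|[|i]]]; destruct j as [|[|[|j]]];
    cbn [Nat.eqb] in H1; try lia; auto. }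
  apply lev_inj in H2; auto. subst b.
  f_equal. apply proof_irrelevance.
Qed.

Lemma grp_lt (u : nat) s : (u < 3)%nat -> (grp u s < 6)%nat.
Proof. intros. unfold grp. destruct s; bdestr; lia. Qed.

Theorem lemma4p4 (p : nat) :
  exists c : vert (4 * p + 1) -> vert (4 * p + 1) -> nat,
    (forall u v, KnnnK2_adj (4 * p + 1) u v ->
       (c u v < 2 * p + 1)%nat /\ c u v = c v u) /\
    (forall k, (k < 2 * p + 1)%nat ->
       planar (fun u v => KnnnK2_adj (4 * p + 1) u v /\ c u v = k)).
Proof.
  exists (cc p). split.
  - intros u v [H1 H2]. destruct u as [[[i a] s] [Hi Ha]], v as [[[j b] s'] [Hj Hb]].
    unfold cc, idx, sd in *; simpl in *.
    destruct s, s'; try congruence; split; auto; apply col_lt; auto.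
  - intros k Hk.
    apply (book_planar _ (fun u => posQ (4*p+1) (grp (prt u) (sd u)) (lev p k (sd u) (idx u)))
             (fun u v => pgQ (grp (prt u) (sd u)) (lev p k (sd u) (idx u)) (grp (prt v) (sd v)) (lev p k (sd v) (idx v)))).
    + intros u v H. apply posQ_inj in H.
      * destruct H. eapply g_inj; eauto.
      * apply grp_lt. destruct u as [x [Hx1 Hx2]]; exact Hx1.
      * apply grp_lt. destruct v as [x [Hx1 Hx2]]; exact Hx1.
      * apply lev_lt. destruct u as [x [Hx1 Hx2]]; exact Hx2.
      * apply lev_lt. destruct v as [x [Hx1 Hx2]]; exact Hx2.
    + intros u v [[H1 H2] _] ->. apply H2; reflexivity.
    + intros u v u' v' [H1 H2] [H3 H4] Hp.
      apply QNI_full; auto; apply key; auto.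
Qed.
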